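(* Let $\nu$ be a fixed order, let $a<b$, and let $f,g\in C^{\infty}[a,b]$ with $g(x)\neq 0$ and $g'(x)\neq 0$ for all $x\in[a,b]$. For $\omega>0$ set $\mathcal{H}_{\nu}[f]=\int_a^b f(x)J_{\nu}(\omega g(x))\,dx$. Define $\sigma_0[f](x)=f(x)$ and, for $k\ge 1$, $$\sigma_k[f](x)=g(x)^{\nu+k}\frac{d}{dx}\left[\frac{\sigma_{k-1}[f](x)}{g(x)^{\nu+k}g'(x)}\right].$$ Then, as $\omega\to\infty$, $$\mathcal{H}_{\nu}[f]\sim-\sum_{k=1}^{\infty}\frac{1}{(-\omega)^k}\left\{\frac{\sigma_{k-1}[f](b)}{g'(b)}J_{\nu+k}(\omega g(b))-\frac{\sigma_{k-1}[f](a)}{g'(a)}J_{\nu+k}(\omega g(a))\right\}.$$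
   Context: $J_\nu$ denotes the Bessel function of the first kind of order $\nu$. The symbol $\sim$ denotes an asymptotic expansion as $\omega\to\infty$. *)

(* Defs.v *)
From Stdlib Require Import Reals Factorial.
From Coquelicot Require Import Coquelicot.
Open Scope R_scope.

Fixpoint rising (s : R) (n : nat) : R :=
  match n with
  | O => s
  | S n' => rising s n' * (s + INR n)
  end.

(* Reciprocal Gamma function 1/Gamma(s), entire, via Gauss' product formula
   Gamma(s) = lim n! n^s / (s (s+1) ... (s+n)); it vanishes at s = 0,-1,-2,... *)
Definition rgamma (s : R) : R :=
  real (Lim_seq (fun n => rising s n / (INR (fact n) * Rpower (INR n) s))).

Definition BesselJ_pos (nu x : R) : R :=
  Rpower (x / 2) nu *
  Series (fun m : nat => (-1) ^ m * rgamma (INR m + nu + 1) / INR (fact m)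
                          * (x / 2) ^ (2 * m)).

(* J_nu(x) on the real line, complex valued, principal branch
   (arg x = pi for x < 0): J_nu(x) = e^{i pi nu} J_nu(|x|) for x < 0.
   The value at x = 0 is irrelevant for the theorem (g never vanishes). *)
Definition BesselJ (nu x : R) : C :=
  if Rlt_dec 0 x then RtoC (BesselJ_pos nu x)
  else if Rlt_dec x 0 then Cmult (cos (PI * nu), sin (PI * nu)) (RtoC (BesselJ_pos nu (- x)))
  else if Req_EM_T nu 0 then RtoC 1 else RtoC 0.

Definition smooth_on (f : R -> R) (a b : R) : Prop :=
  exists c d, c < a /\ b < d /\ forall (n : nat) (x : R), c < x < d -> ex_derive_n f n x.

Definition Hnu (nu : R) (f g : R -> R) (a b omega : R) : C :=
  @RInt C_R_CompleteNormedModule (fun x => scal (f x) (BesselJ nu (omega * g x))) a b.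

(* The power g^(nu+k) is the principal one, e^{i pi (nu+k)} |g|^(nu+k) when g < 0;
   the constant phase cancels, so |g|^(nu+k) is used. *)
Fixpoint sigma (nu : R) (f g : R -> R) (k : nat) : R -> R :=
  match k with
  | O => f
  | S k' => fun x =>
      Rpower (Rabs (g x)) (nu + INR k) *
      Derive (fun y => sigma nu f g k' y / (Rpower (Rabs (g y)) (nu + INR k) * Derive g y)) x
  end.

Definition asym_term (nu : R) (f g : R -> R) (a b omega : R) (k : nat) : C :=
  scal (/ (- omega) ^ k)
    (minus (scal (sigma nu f g (k - 1) b / Derive g b) (BesselJ (nu + INR k) (omega * g b)))
           (scal (sigma nu f g (k - 1) a / Derive g a) (BesselJ (nu + INR k) (omega * g a)))).

(* Main.v *)
Require Import Defs.
From Stdlib Require Import Reals Lra Lia Factorial Classical.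
From Coquelicot Require Import Coquelicot.
Require Import Defs.
Open Scope R_scope.

Definition tg (s : R) (n : nat) : R := rising s n / (INR (fact n) * Rpower (INR n) s).

Lemma rising_shift s n : s * rising (s+1) n = rising s (S n).
Proof.
  induction n as [|n IH].
  - simpl. ring.
  - change (rising (s+1) (S n)) with (rising (s+1) n * (s + 1 + INR (S n))).
    rewrite <- Rmult_assoc, IH.
    change (rising s (S (S n))) with (rising s (S n) * (s + INR (S (S n)))).
    rewrite (S_INR (S n)). ring.
Qed.

Lemma rising_zero s j n : s + INR j = 0 -> (j <= n)%nat -> rising s n = 0.
Proof.
  intros Hj Hn. induction n as [|n IH].
  - assert (j = 0%nat) by lia. subst. simpl in *. lra.
  - change (rising s (S n)) with (rising s n * (s + INR (S n))).
    destruct (Nat.eq_dec j (S n)) as [E|E].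
    + subst. rewrite Hj. ring.
    + rewrite IH by lia. ring.
Qed.

Lemma Rabs_le_inv' x y : Rabs x <= y -> - y <= x <= y.
Proof. unfold Rabs; destruct (Rcase_abs x); intros; lra. Qed.

Lemma ln1p_bound u : Rabs u <= /2 -> Rabs (ln (1+u) - u) <= 2 * u^2.
Proof.
  intros Hu. apply Rabs_le_inv' in Hu.
  assert (P : 0 < 1 + u) by lra.
  assert (U : ln (1+u) <= u).
  { rewrite <- (ln_exp u) at 2. apply ln_le; [lra|]. apply exp_ineq1_le. }
  assert (L : u / (1+u) <= ln (1+u)).
  { pose proof (exp_ineq1_le (- (u/(1+u)))) as E.
    assert (E2 : / (1+u) <= exp (- (u / (1+u)))).
    { replace (/ (1+u)) with (1 + - (u/(1+u))) by (field; lra). exact E. }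
    apply ln_le in E2; [|apply Rinv_0_lt_compat; lra].
    rewrite ln_exp, ln_Rinv in E2 by lra. lra. }
  assert (L2 : u - 2 * u^2 <= u / (1+u)).
  { apply Rmult_le_reg_r with (1+u); [lra|].
    unfold Rdiv. rewrite Rmult_assoc, Rinv_l by lra. nra. }
  apply Rabs_le. nra.
Qed.

Lemma is_series_tele :
  is_series (fun k => / (INR (S k) * INR (S (S k)))) 1.
Proof.
  unfold is_series.
  change (is_lim_seq (sum_n (fun k => / (INR (S k) * INR (S (S k))))) 1).
  apply (is_lim_seq_ext (fun n => 1 - / INR (S (S n)))).
  - intros n. induction n as [|n IH].
    + rewrite sum_O. simpl. field.
    + rewrite sum_Sn, <- IH. rewrite (S_INR (S (S n))), (S_INR (S n)).
      assert (Px : 0 < INR (S n)) by (apply lt_0_INR; lia).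
      revert Px. generalize (INR (S n)). intros x Px. unfold plus; simpl.
      field. lra.
  - assert (K : forall l, l = 1 - 0 -> is_lim_seq (fun n => 1 - / INR (S (S n))) l -> is_lim_seq (fun n => 1 - / INR (S (S n))) 1).
    { intros l E H. rewrite E, Rminus_0_r in H. exact H. }
    apply (K _ eq_refl).
    apply (is_lim_seq_minus' (fun _ => 1) (fun n => / INR (S (S n))) 1 0).
    + apply is_lim_seq_const.
    + assert (H := is_lim_seq_inv _ _ is_lim_seq_INR).
      simpl in H. specialize (H ltac:(discriminate)).
      apply (is_lim_seq_incr_n _ 2) in H.
      eapply is_lim_seq_ext; [|exact H].
      intros n. cbv beta. rewrite Nat.add_comm. reflexivity.
Qed.

Lemma tg_conv s : ex_finite_lim_seq (tg s).
Proof.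
  destruct (classic (exists j : nat, s + INR j = 0)) as [[j Hj]|Hnz].
  - exists 0. apply (is_lim_seq_ext_loc (fun _ => 0)).
    + exists j. intros n Hn. unfold tg. rewrite (rising_zero s j n Hj Hn). unfold Rdiv. ring.
    + apply is_lim_seq_const.
  - assert (Hnz' : forall j : nat, s + INR j <> 0) by (intros j Hj; apply Hnz; exists j; exact Hj).
    destruct (INR_unbounded (2 * Rabs s + 2)) as [n0 Hn0].
    set (r := fun n : nat => (1 + s / INR (S n)) * exp (s * ln (1 - / INR (S n)))).
    assert (Hstep : forall n, (1 <= n)%nat -> tg s (S n) = tg s n * r n).
    { intros n Hn. unfold tg, r, Rpower.
      change (rising s (S n)) with (rising s n * (s + INR (S n))).
      rewrite fact_simpl, mult_INR.
      assert (Pn : 0 < INR n) by (apply lt_0_INR; lia).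
      assert (PSn : 0 < INR (S n)) by (apply lt_0_INR; lia).
      replace (1 - / INR (S n)) with (INR n / INR (S n)) by (rewrite S_INR; field; lra).
      rewrite ln_div by lra.
      assert (E : exp (s * (ln (INR n) - ln (INR (S n)))) * exp (s * ln (INR (S n)))
                  = exp (s * ln (INR n))).
      { rewrite <- exp_plus. f_equal. ring. }
      assert (X1 : 0 < exp (s * ln (INR (S n)))) by apply exp_pos.
      assert (X2 : 0 < exp (s * ln (INR n))) by apply exp_pos.
      assert (Fp : 0 < INR (fact n)) by (apply lt_0_INR; apply lt_O_fact).
      replace (exp (s * (ln (INR n) - ln (INR (S n)))))
        with (exp (s * ln (INR n)) / exp (s * ln (INR (S n)))) by (rewrite <- E; field; lra).
      field. repeat split; lra. }
    assert (Hr : forall k, 0 < r (n0 + k)%nat /\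
                 Rabs (ln (r (n0 + k)%nat)) <= (2 * s^2 + 2 * Rabs s) * / (INR (S k) * INR (S (S k)))).
    { intros k. pose proof (pos_INR n0) as Pn0. set (m := INR (S (n0 + k))).
      assert (Hm : INR n0 + 1 <= m) by (unfold m; rewrite S_INR, plus_INR; pose proof (pos_INR k); lra).
      assert (Hm2 : INR (S k) * INR (S (S k)) <= m * m).
      { unfold m. rewrite !S_INR, plus_INR. pose proof (pos_INR k). pose proof (pos_INR n0).
        assert (1 <= INR n0) by (pose proof (Rabs_pos s); lra). nra. }
      assert (Hsm : Rabs (s / m) <= /2).
      { unfold Rdiv. rewrite Rabs_mult, Rabs_inv, (Rabs_pos_eq m) by lra.
        apply Rmult_le_reg_r with m; [lra|]. rewrite Rmult_assoc, Rinv_l by lra.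
        pose proof (Rabs_pos s). lra. }
      assert (Hvm : Rabs (- / m) <= /2).
      { rewrite Rabs_Ropp, Rabs_inv, Rabs_pos_eq by lra.
        apply Rinv_le_contravar; pose proof (Rabs_pos s); lra. }
      apply Rabs_le_inv' in Hsm.
      split.
      - unfold r. fold m. apply Rmult_lt_0_compat; [lra|apply exp_pos].
      - unfold r. fold m. rewrite ln_mult by (try apply exp_pos; lra).
        rewrite ln_exp.
        pose proof (ln1p_bound (s/m)) as B1. pose proof (ln1p_bound (- / m) Hvm) as B2.
        replace (ln (1 + s / m) + s * ln (1 - / m))
          with ((ln (1 + s/m) - s/m) + s * (ln (1 + - / m) - - / m))
          by (unfold Rminus; field; lra).
        eapply Rle_trans; [apply Rabs_triang|].
        rewrite Rabs_mult.
        assert (B1' := B1 ltac:(apply Rabs_le; lra)).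
        assert (Q : 2 * (s/m)^2 + Rabs s * (2 * (- / m)^2)
                   = (2 * s^2 + 2 * Rabs s) * / (m*m)) by (field; lra).
        apply Rle_trans with (2 * (s/m)^2 + Rabs s * (2 * (- / m)^2)).
        + apply Rplus_le_compat; [exact B1'|].
          apply Rmult_le_compat_l; [apply Rabs_pos|exact B2].
        + rewrite Q. apply Rmult_le_compat_l.
          * pose proof (Rabs_pos s). nra.
          * apply Rinv_le_contravar; [|exact Hm2].
            apply Rmult_lt_0_compat; apply lt_0_INR; lia. }
    set (e := fun k => ln (r (n0 + k)%nat)).
    assert (Hes : ex_series e).
    { apply (ex_series_le e (fun k => (2 * s^2 + 2 * Rabs s) * / (INR (S k) * INR (S (S k))))).
      - intros k. apply (Hr k).
      - exists ((2 * s^2 + 2 * Rabs s) * 1).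
        exact (is_series_scal_l (K:=R_AbsRing) (V:=R_NormedModule) (2 * s^2 + 2 * Rabs s) _ 1 is_series_tele). }
    destruct Hes as [L HL].
    assert (n0pos : (1 <= n0)%nat).
    { destruct n0; [simpl in Hn0; pose proof (Rabs_pos s); lra|lia]. }
    assert (Hprod : forall k, tg s (n0 + S k)%nat = tg s n0 * exp (sum_n e k)).
    { induction k as [|k IH].
      - rewrite sum_O. unfold e. rewrite exp_ln by apply (Hr 0%nat).
        replace (n0 + 1)%nat with (S n0) by lia. rewrite Nat.add_0_r. apply Hstep. lia.
      - rewrite sum_Sn. unfold plus; simpl. rewrite exp_plus, <- Rmult_assoc, <- IH.
        unfold e. rewrite exp_ln by apply (Hr (S k)).
        replace (n0 + S (S k))%nat with (S (n0 + S k)) by lia. apply Hstep. lia. }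
    exists (tg s n0 * exp L).
    apply (is_lim_seq_incr_n _ (S n0)).
    apply (is_lim_seq_ext (fun k => tg s n0 * exp (sum_n e k))).
    + intros k. rewrite <- Hprod. f_equal. lia.
    + apply (is_lim_seq_scal_l _ (tg s n0) (exp L)).
      apply (is_lim_seq_continuous exp (sum_n e) L).
      * apply derivable_continuous_pt. apply derivable_pt_exp.
      * exact HL.
Qed.

Lemma rgamma_rec s : rgamma s = s * rgamma (s + 1).
Proof.
  destruct (tg_conv s) as [l Hl]. destruct (tg_conv (s+1)) as [l' Hl'].
  assert (R1 : rgamma s = l).
  { unfold rgamma. fold (tg s). rewrite (is_lim_seq_unique _ _ Hl). reflexivity. }
  assert (R2 : rgamma (s+1) = l').
  { unfold rgamma. fold (tg (s+1)). rewrite (is_lim_seq_unique _ _ Hl'). reflexivity. }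
  rewrite R1, R2.
  set (c := fun n : nat => exp ((s+1) * ln (1 + / INR n))).
  assert (Hc : is_lim_seq c 1).
  { replace 1 with (exp ((s+1) * ln (1 + 0))) by (rewrite Rplus_0_r, ln_1, Rmult_0_r, exp_0; reflexivity).
    apply (is_lim_seq_continuous (fun x => exp ((s+1) * ln (1 + x)))).
    - apply continuity_pt_filterlim. apply (ex_derive_continuous (fun x => exp ((s+1) * ln (1 + x)))).
      auto_derive. lra.
    - assert (H := is_lim_seq_inv _ _ is_lim_seq_INR).
      simpl in H. apply H. discriminate. }
  assert (H1 : is_lim_seq (fun n => tg s (S n) * c n) (l * 1)).
  { apply is_lim_seq_mult'; [|exact Hc]. apply (is_lim_seq_incr_1 (tg s)). exact Hl. }
  assert (H2 : is_lim_seq (fun n => tg s (S n) * c n) (s * l')).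
  { apply (is_lim_seq_ext_loc (fun n => s * tg (s+1) n)).
    - exists 1%nat. intros n Hn. unfold tg, c, Rpower.
      rewrite <- rising_shift. rewrite fact_simpl, mult_INR.
      assert (Pn : 0 < INR n) by (apply lt_0_INR; lia).
      assert (PSn : 0 < INR (S n)) by (apply lt_0_INR; lia).
      replace (1 + / INR n) with (INR (S n) / INR n) by (rewrite S_INR; field; lra).
      rewrite ln_div by lra.
      set (A := ln (INR (S n))). set (B := ln (INR n)).
      assert (EA : exp A = INR (S n)) by (apply exp_ln; lra).
      assert (E : exp ((s+1) * (A - B)) = exp (s * A) * exp A / exp ((s+1) * B)).
      { assert (E0 : exp ((s+1) * (A - B)) * exp ((s+1) * B) = exp (s * A) * exp A).
        { rewrite <- !exp_plus. f_equal. ring. }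
        rewrite <- E0. field. apply Rgt_not_eq, exp_pos. }
      rewrite E, EA.
      assert (X1 : 0 < exp (s * A)) by apply exp_pos.
      assert (X2 : 0 < exp ((s+1) * B)) by apply exp_pos.
      assert (Fp : 0 < INR (fact n)) by (apply lt_0_INR; apply lt_O_fact).
      field. repeat split; lra.
    - apply (is_lim_seq_scal_l _ s l'). exact Hl'. }
  pose proof (is_lim_seq_unique _ _ H1) as U1. rewrite (is_lim_seq_unique _ _ H2) in U1.
  injection U1. lra.
Qed.

Definition ac (mu : R) (m : nat) : R := (-1)^m * rgamma (INR m + mu + 1) / INR (fact m).
Definition SS (mu z : R) : R := PSeries (ac mu) z.
Definition J (mu x : R) : R := Rpower (x/2) mu * SS mu ((x/2)^2).

Lemma BesselJ_pos_J mu x : BesselJ_pos mu x = J mu x.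
Proof.
  unfold BesselJ_pos, J, SS, PSeries. f_equal. apply Series_ext. intros m.
  unfold ac. rewrite pow_mult. reflexivity.
Qed.

Lemma INR_fact_pos n : 0 < INR (fact n).
Proof. apply lt_0_INR, lt_O_fact. Qed.

Lemma ac_ratio mu n : ac mu (S n) * (INR (S n) * (INR n + mu + 1)) = - ac mu n.
Proof.
  unfold ac. rewrite (rgamma_rec (INR n + mu + 1)).
  replace (INR (S n) + mu + 1) with (INR n + mu + 1 + 1) by (rewrite S_INR; ring).
  rewrite fact_simpl, mult_INR. pose proof (INR_fact_pos n).
  assert (0 < INR (S n)) by (apply lt_0_INR; lia).
  simpl pow. field. lra.
Qed.

Lemma ac_shift mu n : ac mu n = (INR n + mu + 1) * ac (mu + 1) n.
Proof.
  unfold ac. rewrite (rgamma_rec (INR n + mu + 1)).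
  replace (INR n + (mu + 1) + 1) with (INR n + mu + 1 + 1) by ring.
  pose proof (INR_fact_pos n). field. lra.
Qed.

Lemma sum_f_R0_ge (b : nat -> R) k N : (forall i, 0 <= b i) -> (k <= N)%nat -> b k <= sum_f_R0 b N.
Proof.
  intros Hb Hk. induction N as [|N IH].
  - assert (k = 0%nat) by lia. subst. simpl. lra.
  - simpl. destruct (Nat.eq_dec k (S N)) as [E|E].
    + subst. assert (0 <= sum_f_R0 b N).
      { clear IH Hk. induction N; simpl. apply Hb. specialize (Hb (S N)). lra. }
      lra.
    + specialize (IH ltac:(lia)). specialize (Hb (S N)). lra.
Qed.

Lemma ac_radius mu z : Rbar_lt (Rabs z) (CV_radius (ac mu)).
Proof.
  set (r := Rabs z + 1).
  assert (Hr : 0 < r) by (unfold r; pose proof (Rabs_pos z); lra).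
  destruct (INR_unbounded (r + Rabs mu + 1)) as [n1 Hn1].
  set (b := fun n => Rabs (ac mu n * r^n)).
  assert (Hb0 : forall n, 0 <= b n) by (intros; apply Rabs_pos).
  assert (Hdec : forall n, (n1 <= n)%nat -> b (S n) <= b n).
  { intros n Hn. unfold b. rewrite !Rabs_mult, <- !RPow_abs, (Rabs_pos_eq r) by lra.
    set (q := INR (S n) * (INR n + mu + 1)).
    assert (Hq : r <= q).
    { unfold q. apply le_INR in Hn. rewrite S_INR.
      pose proof (pos_INR n). pose proof (Rabs_pos mu).
      assert (mu >= - Rabs mu) by (unfold Rabs; destruct (Rcase_abs mu); lra). nra. }
    assert (E : Rabs (ac mu (S n)) * q = Rabs (ac mu n)).
    { rewrite <- (Rabs_Ropp (ac mu n)), <- ac_ratio. fold q. rewrite Rabs_mult, (Rabs_pos_eq q) by lra. reflexivity. }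
    rewrite <- E. simpl pow.
    assert (0 <= Rabs (ac mu (S n)) * r ^ n) by (apply Rmult_le_pos; [apply Rabs_pos|apply pow_le; lra]).
    nra. }
  assert (Hle : forall n, b n <= sum_f_R0 b n1).
  { intros n. destruct (Compare_dec.le_lt_dec n n1) as [H|H].
    - apply sum_f_R0_ge; auto.
    - apply Rle_trans with (b n1); [|apply sum_f_R0_ge; auto].
      replace n with (n1 + (n - n1))%nat by lia.
      induction (n - n1)%nat as [|k IH].
      + rewrite Nat.add_0_r. lra.
      + replace (n1 + S k)%nat with (S (n1 + k)) by lia.
        eapply Rle_trans; [apply Hdec; lia|exact IH]. }
  assert (Hrad : Rbar_le r (CV_radius (ac mu))).
  { destruct (CV_radius_bounded (ac mu)) as [Hub _]. apply Hub.
    exists (sum_f_R0 b n1). exact Hle. }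
  destruct (CV_radius (ac mu)) as [c| |]; simpl in *; unfold r in Hrad; lra || auto.
Qed.

Lemma SS_derive mu z : is_derive (SS mu) z (- SS (mu+1) z).
Proof.
  unfold SS. replace (- PSeries (ac (mu + 1)) z) with (PSeries (PS_derive (ac mu)) z).
  - apply is_derive_PSeries. apply ac_radius.
  - unfold PSeries. rewrite <- Series_opp. apply Series_ext. intros n.
    unfold PS_derive. unfold ac.
    replace (INR (S n) + mu + 1) with (INR n + (mu + 1) + 1) by (rewrite S_INR; ring).
    rewrite fact_simpl, mult_INR. pose proof (INR_fact_pos n).
    assert (0 < INR (S n)) by (apply lt_0_INR; lia).
    simpl pow. field. lra.
Qed.

Lemma SS_rec mu z : SS mu z = (mu + 1) * SS (mu + 1) z - z * SS (mu + 2) z.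
Proof.
  assert (E2 : mu + 2 = mu + 1 + 1) by ring. rewrite E2.
  set (a := ac (mu + 1)).
  assert (D : - SS (mu + 1 + 1) z = PSeries (PS_derive a) z).
  { unfold a. rewrite <- (is_derive_unique _ _ _ (SS_derive (mu+1) z)). unfold SS.
    apply is_derive_unique. apply is_derive_PSeries, ac_radius. }
  replace (z * SS (mu + 1 + 1) z) with (- PSeries (PS_incr_1 (PS_derive a)) z)
    by (rewrite PSeries_incr_1, <- D; ring).
  unfold SS. unfold PSeries.
  rewrite <- Series_scal_l.
  unfold Rminus. rewrite Ropp_involutive.
  rewrite <- Series_plus.
  - apply Series_ext. intros n. rewrite ac_shift. fold a.
    destruct n as [|n].
    + simpl. unfold zero; simpl. ring.
    + unfold PS_incr_1, PS_derive. ring.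
  - apply ex_series_Rabs. apply (ex_series_ext (fun n => Rabs (a n * z^n) * Rabs (mu + 1))).
    + intros n. rewrite <- Rabs_mult. f_equal. unfold a. ring.
    + apply ex_series_scal_r. apply CV_disk_inside. apply ac_radius.
  - apply ex_pseries_R. apply ex_pseries_incr_1. apply ex_pseries_derive. apply ac_radius.
Qed.

Lemma J_derive mu x : 0 < x -> is_derive (J mu) x (- J (mu + 1) x + mu / x * J mu x).
Proof.
  intros Hx. unfold J.
  assert (H1 : is_derive (fun y => Rpower (y/2) mu) x (mu / x * Rpower (x/2) mu)).
  { unfold Rpower. auto_derive; [lra|]. unfold Rdiv. field. lra. }
  assert (H2 : is_derive (fun y => SS mu ((y/2)^2)) x ((x/2) * (- SS (mu+1) ((x/2)^2)))).
  { apply (is_derive_comp (SS mu) (fun y => (y/2)^2)).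
    - apply SS_derive.
    - auto_derive; [auto|]. field. }
  replace (- (Rpower (x / 2) (mu + 1) * SS (mu + 1) ((x / 2) ^ 2)) +
           mu / x * (Rpower (x / 2) mu * SS mu ((x / 2) ^ 2)))
    with (plus (mult (mu / x * Rpower (x/2) mu) (SS mu ((x/2)^2)))
               (mult (Rpower (x/2) mu) ((x/2) * (- SS (mu+1) ((x/2)^2))))).
  - apply (is_derive_mult (fun y => Rpower (y/2) mu) (fun y => SS mu ((y/2)^2))); auto.
    intros; apply Rmult_comm.
  - rewrite Rpower_plus, Rpower_1 by lra. unfold plus, mult; simpl. ring.
Qed.

Lemma J_rec3 mu x : 0 < x -> J mu x = 2 * (mu + 1) / x * J (mu + 1) x - J (mu + 2) x.
Proof.
  intros Hx. unfold J. rewrite (SS_rec mu).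
  replace (mu + 2) with (mu + 1 + 1) by ring.
  rewrite !Rpower_plus, !Rpower_1 by lra. field. lra.
Qed.


Lemma J_derive2 mu x : 0 < x -> is_derive (J mu) x (J (mu - 1) x - mu / x * J mu x).
Proof.
  intros Hx. replace (J (mu - 1) x - mu / x * J mu x) with (- J (mu + 1) x + mu / x * J mu x).
  - apply J_derive. exact Hx.
  - rewrite (J_rec3 (mu - 1) x Hx). replace (mu - 1 + 1) with mu by ring.
    replace (mu - 1 + 2) with (mu + 1) by ring. field. lra.
Qed.

Lemma is_derive_cont_pt f x l : is_derive f x l -> continuity_pt f x.
Proof. intros H. apply derivable_continuous_pt. exists l. apply is_derive_Reals. exact H. Qed.

Lemma J_derive_up mu x : 0 < x -> is_derive (J (mu + 1)) x (J mu x - (mu + 1) / x * J (mu + 1) x).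
Proof.
  intros Hx. pose proof (J_derive2 (mu + 1) x Hx) as H.
  replace (mu + 1 - 1) with mu in H by ring. exact H.
Qed.

Lemma J_ex_derive mu x : 0 < x -> ex_derive (J mu) x.
Proof. intros Hx. eexists. apply J_derive. exact Hx. Qed.

Lemma J_bound mu : exists X K, 1 <= X /\ 0 <= K /\
  forall x, X <= x -> Rabs (J mu x) <= K / sqrt x.
Proof.
  set (k := 1 + 2 * mu). set (c := Rabs k).
  set (F := fun y => y * (J mu y ^ 2 + J (mu+1) y ^ 2) - k * J mu y * J (mu+1) y).
  set (G := fun y => F y * exp (c / y)).
  set (X := 1 + c).
  assert (Hc : 0 <= c) by apply Rabs_pos.
  assert (HX : 1 <= X) by (unfold X; lra).
  assert (HkAB : forall y, Rabs (k * J mu y * J (mu+1) y) <= c * ((J mu y ^ 2 + J (mu+1) y ^ 2) / 2)).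
  { intros y. rewrite !Rabs_mult. fold c. rewrite Rmult_assoc. apply Rmult_le_compat_l; [exact Hc|].
    set (p := J mu y). set (q := J (mu+1) y).
    assert (Rabs p * Rabs q <= (Rabs p ^ 2 + Rabs q ^ 2) / 2) by (assert (Hs := pow2_ge_0 (Rabs p - Rabs q));
        replace ((Rabs p - Rabs q)^2) with (Rabs p^2 + Rabs q^2 - 2*(Rabs p*Rabs q)) in Hs by ring; lra).
    rewrite <- (pow2_abs p), <- (pow2_abs q). exact H. }
  assert (HF : forall y, X <= y -> y * (J mu y ^ 2 + J (mu+1) y ^ 2) <= 2 * F y).
  { intros y Hy. unfold F. pose proof (HkAB y) as H. apply Rabs_le_inv' in H.
    assert (0 <= J mu y ^ 2 + J (mu+1) y ^ 2) by (apply Rplus_le_le_0_compat; apply pow2_ge_0).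
    assert (c * ((J mu y ^ 2 + J (mu+1) y ^ 2) / 2) <= y * ((J mu y ^ 2 + J (mu+1) y ^ 2) / 2)).
    { apply Rmult_le_compat_r; [lra|]. unfold X in Hy. lra. }
    lra. }
  assert (HG' : forall y, 0 < y -> is_derive G y
     ((k * J mu y * J (mu+1) y / y) * exp (c / y) + F y * (exp (c / y) * (- c / y ^ 2)))).
  { intros y Hy. unfold G, F.
    assert (D1 := J_derive mu y Hy). assert (D2 := J_derive_up mu y Hy).
    auto_derive.
    - repeat split; try (eexists; eassumption); lra.
    - replace (Derive (fun x => J mu x) y) with (- J (mu + 1) y + mu / y * J mu y)
        by (symmetry; apply is_derive_unique; exact D1).
      replace (Derive (fun x => J (mu + 1) x) y) with (J mu y - (mu + 1) / y * J (mu + 1) y)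
        by (symmetry; apply is_derive_unique; exact D2).
      unfold k, Rdiv. field. lra. }
  assert (HGd : forall y, X <= y -> (k * J mu y * J (mu+1) y / y) * exp (c / y) + F y * (exp (c / y) * (- c / y ^ 2)) <= 0).
  { intros y Hy. assert (Py : 0 < y) by lra.
    pose proof (HF y Hy) as H1. pose proof (HkAB y) as H2. apply Rabs_le_inv' in H2.
    assert (E : 0 < exp (c / y)) by apply exp_pos.
    set (E2 := J mu y ^ 2 + J (mu + 1) y ^ 2) in *.
    set (P := k * J mu y * J (mu + 1) y) in *.
    assert (H3 : P / y <= c * F y / y ^ 2).
    { apply Rle_trans with (c * (E2 / 2) / y).
      - unfold Rdiv. apply Rmult_le_compat_r; [apply Rlt_le, Rinv_0_lt_compat; lra|lra].
      - replace (c * F y / y ^ 2) with (c * (F y / y) / y) by (field; lra).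
        unfold Rdiv. apply Rmult_le_compat_r; [apply Rlt_le, Rinv_0_lt_compat; lra|].
        apply Rmult_le_compat_l; [lra|].
        apply Rmult_le_reg_r with y; [lra|]. rewrite (Rmult_assoc (F y)), Rinv_l, Rmult_1_r by lra. lra. }
    replace (P / y * exp (c / y) + F y * (exp (c / y) * (- c / y ^ 2)))
      with (exp (c / y) * (P / y - c * F y / y ^ 2)) by (field; lra).
    assert (P / y - c * F y / y ^ 2 <= 0) by lra.
    rewrite <- (Rmult_0_r (exp (c / y))). apply Rmult_le_compat_l; lra. }
  assert (HGdec : forall x, X <= x -> G x <= G X).
  { intros x Hx. destruct (Req_dec x X) as [E|E]; [subst; lra|].
    destruct (MVT_gen G X x (fun y => (k * J mu y * J (mu+1) y / y) * exp (c / y) + F y * (exp (c / y) * (- c / y ^ 2)))) as [t [Ht Et]].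
    - intros y Hy. apply HG'. rewrite Rmin_left in Hy by lra. lra.
    - intros y Hy. rewrite Rmin_left in Hy by lra. eapply is_derive_cont_pt. apply HG'. lra.
    - rewrite Rmin_left, Rmax_right in Ht by lra.
      pose proof (HGd t ltac:(lra)). assert (0 <= x - X) by lra.
      assert (Q : (k * J mu t * J (mu + 1) t / t * exp (c / t) + F t * (exp (c / t) * (- c / t ^ 2))) * (x - X) <= 0 * (x - X)).
      { apply Rmult_le_compat_r; lra. }
      lra. }
  assert (HFX : 0 <= F X).
  { pose proof (HF X ltac:(lra)). assert (0 <= X * (J mu X ^ 2 + J (mu+1) X ^ 2)).
    { apply Rmult_le_pos; [lra|]. apply Rplus_le_le_0_compat; apply pow2_ge_0. } lra. }
  assert (HGX : 0 <= G X) by (unfold G; apply Rmult_le_pos; [exact HFX|apply Rlt_le, exp_pos]).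
  exists X, (sqrt (2 * G X)). split; [exact HX|]. split; [apply sqrt_pos|].
  intros x Hx.
  assert (Px : 0 < x) by lra.
  assert (H1 : x * J mu x ^ 2 <= 2 * G X).
  { pose proof (HF x Hx). pose proof (HGdec x Hx).
    assert (F x <= G x).
    { unfold G. assert (0 <= F x).
      { assert (0 <= x * (J mu x ^ 2 + J (mu+1) x ^ 2)).
        { apply Rmult_le_pos; [lra|]. apply Rplus_le_le_0_compat; apply pow2_ge_0. }
        lra. }
      assert (1 <= exp (c / x)).
      { pose proof (exp_ineq1_le (c / x)).
        assert (0 <= c / x) by (apply Rmult_le_pos; [lra|apply Rlt_le, Rinv_0_lt_compat; lra]). lra. }
      rewrite <- (Rmult_1_r (F x)) at 1. apply Rmult_le_compat_l; lra. }
    assert (x * J mu x ^ 2 <= x * (J mu x ^ 2 + J (mu+1) x ^ 2)).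
    { apply Rmult_le_compat_l; [lra|]. pose proof (pow2_ge_0 (J (mu+1) x)). lra. }
    lra. }
  assert (Sx : 0 < sqrt x) by (apply sqrt_lt_R0; lra).
  assert (Sxx : sqrt x * sqrt x = x) by (apply sqrt_sqrt; lra).
  assert (SG : sqrt (2 * G X) * sqrt (2 * G X) = 2 * G X) by (apply sqrt_sqrt; lra).
  pose proof (sqrt_pos (2 * G X)).
  apply Rmult_le_reg_r with (sqrt x); [lra|].
  unfold Rdiv. rewrite Rmult_assoc, Rinv_l, Rmult_1_r by lra.
  rewrite <- (pow2_abs (J mu x)) in H1. pose proof (Rabs_pos (J mu x)).
  apply Rsqr_incr_0_var; [|exact H]. unfold Rsqr. rewrite SG.
  replace (Rabs (J mu x) * sqrt x * (Rabs (J mu x) * sqrt x)) with (Rabs (J mu x) ^ 2 * (sqrt x * sqrt x)) by ring.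
  rewrite Sxx. lra.
Qed.

Fixpoint Cn (c d : R) (n : nat) (h : R -> R) : Prop :=
  match n with
  | O => True
  | S n => (forall x, c < x < d -> ex_derive h x) /\ Cn c d n (Derive h)
  end.

Lemma locU c d x : c < x < d -> locally x (fun t => c < t < d).
Proof.
  intros Hx. assert (He : 0 < Rmin (x - c) (d - x)) by (apply Rmin_pos; lra).
  exists (mkposreal _ He). intros t Ht. simpl in Ht. unfold ball in Ht; simpl in Ht.
  unfold AbsRing_ball, abs, minus, plus, opp in Ht; simpl in Ht.
  apply Rabs_def2 in Ht. destruct Ht as [H1 H2].
  pose proof (Rmin_l (x - c) (d - x)). pose proof (Rmin_r (x - c) (d - x)). lra.
Qed.

Lemma Cn_mono c d n h : Cn c d (S n) h -> Cn c d n h.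
Proof.
  revert h. induction n as [|n IH]; intros h H; [exact I|].
  destruct H as [H1 H2]. split; [exact H1|]. apply IH. exact H2.
Qed.

Lemma Cn_mono_le c d n m h : (m <= n)%nat -> Cn c d n h -> Cn c d m h.
Proof.
  intros Hmn. induction Hmn; auto. intros H. apply IHHmn. apply Cn_mono. exact H.
Qed.

Lemma Cn_ext c d n h k : (forall x, c < x < d -> h x = k x) -> Cn c d n h -> Cn c d n k.
Proof.
  revert h k. induction n as [|n IH]; intros h k E H; [exact I|].
  destruct H as [H1 H2]. split.
  - intros x Hx. apply (ex_derive_ext_loc h k x); [|apply H1; exact Hx].
    eapply filter_imp; [|apply (locU c d x Hx)]. intros t Ht. apply E. exact Ht.
  - apply (IH (Derive h)); [|exact H2].
    intros x Hx. apply Derive_ext_loc.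
    eapply filter_imp; [|apply (locU c d x Hx)]. intros t Ht. apply E. exact Ht.
Qed.

Lemma Cn_const c d n a : Cn c d n (fun _ => a).
Proof.
  induction n as [|n IH]; [exact I|]. split.
  - intros; apply ex_derive_const.
  - apply (Cn_ext c d n (fun _ => 0)); [intros; rewrite Derive_const; reflexivity|].
    clear IH. induction n as [|n IH]; [exact I|]. split.
    + intros; apply ex_derive_const.
    + apply (Cn_ext c d n (fun _ => 0)); [intros; rewrite Derive_const; reflexivity|]. exact IH.
Qed.

Lemma Cn_plus c d n h k : Cn c d n h -> Cn c d n k -> Cn c d n (fun x => h x + k x).
Proof.
  revert h k. induction n as [|n IH]; intros h k Hh Hk; [exact I|].
  destruct Hh as [Hh1 Hh2]. destruct Hk as [Hk1 Hk2]. split.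
  - intros x Hx. apply (ex_derive_plus h k); auto.
  - apply (Cn_ext c d n (fun x => Derive h x + Derive k x)).
    + intros x Hx. symmetry. apply (Derive_plus h k); auto.
    + apply IH; auto.
Qed.

Lemma Cn_mult c d n h k : Cn c d n h -> Cn c d n k -> Cn c d n (fun x => h x * k x).
Proof.
  revert h k. induction n as [|n IH]; intros h k Hh Hk; [exact I|].
  pose proof (Cn_mono _ _ _ _ Hh) as Hh'. pose proof (Cn_mono _ _ _ _ Hk) as Hk'.
  destruct Hh as [Hh1 Hh2]. destruct Hk as [Hk1 Hk2]. split.
  - intros x Hx. apply ex_derive_mult; auto.
  - apply (Cn_ext c d n (fun x => Derive h x * k x + h x * Derive k x)).
    + intros x Hx. symmetry. apply Derive_mult; auto.
    + apply Cn_plus; apply IH; auto.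
Qed.

Lemma Cn_inv c d n h : Cn c d n h -> (forall x, c < x < d -> h x <> 0) -> Cn c d n (fun x => / h x).
Proof.
  intros Hh Hnz. revert h Hh Hnz. induction n as [|n IH]; intros h Hh Hnz; [exact I|].
  pose proof (Cn_mono _ _ _ _ Hh) as Hh'.
  destruct Hh as [Hh1 Hh2]. split.
  - intros x Hx. apply ex_derive_inv; auto.
  - apply (Cn_ext c d n (fun x => (-1) * Derive h x * (/ h x * / h x))).
    + intros x Hx. rewrite Derive_inv; auto. specialize (Hnz x Hx). field. exact Hnz.
    + apply Cn_mult; [apply Cn_mult; [apply Cn_const|exact Hh2]|].
      apply Cn_mult; apply IH; auto.
Qed.

Lemma rpow_abs_eq y p : y <> 0 -> Rpower (Rabs y) p = exp (p / 2 * ln (y * y)).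
Proof.
  intros Hy. unfold Rpower. f_equal.
  assert (0 < Rabs y) by (apply Rabs_pos_lt; exact Hy).
  replace (y * y) with (Rabs y * Rabs y) by (rewrite <- Rabs_mult; apply Rabs_pos_eq; nra).
  rewrite ln_mult by lra. field.
Qed.

Lemma rpow_abs_derive h p x : h x <> 0 -> ex_derive h x ->
  is_derive (fun y => Rpower (Rabs (h y)) p) x (p * Rpower (Rabs (h x)) p * (Derive h x * / h x)).
Proof.
  intros Hx Hd.
  assert (Hloc : locally x (fun y => h y <> 0)).
  { apply ex_derive_continuous in Hd.
    assert (He : 0 < Rabs (h x)) by (apply Rabs_pos_lt; exact Hx).
    destruct (Hd (ball (h x) (mkposreal _ He))) as [del Hdel].
    { apply locally_ball. }
    exists del. intros y Hy. specialize (Hdel y Hy). unfold ball in Hdel; simpl in Hdel.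
    unfold AbsRing_ball, abs, minus, plus, opp in Hdel; simpl in Hdel.
    intros E. rewrite E in Hdel. rewrite Rplus_0_l, Rabs_Ropp in Hdel. lra. }
  apply (is_derive_ext_loc (fun y => exp (p / 2 * ln (h y * h y)))).
  - eapply filter_imp; [|exact Hloc]. intros y Hy. symmetry. apply rpow_abs_eq. exact Hy.
  - rewrite (rpow_abs_eq (h x) p Hx).
    assert (0 < h x * h x) by (pose proof (Rsqr_pos_lt _ Hx) as Hs; unfold Rsqr in Hs; exact Hs).
    auto_derive.
    + repeat split; auto.
    + change (Derive (fun x0 => h x0) x) with (Derive h x). field. exact Hx.
Qed.

Lemma Cn_rpow c d n h p : Cn c d n h -> (forall x, c < x < d -> h x <> 0) ->
  Cn c d n (fun x => Rpower (Rabs (h x)) p).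
Proof.
  intros Hh Hnz. revert Hh. induction n as [|n IH]; intros Hh; [exact I|].
  pose proof (Cn_mono _ _ _ _ Hh) as Hh'.
  destruct Hh as [Hh1 Hh2]. split.
  - intros x Hx. eexists. apply rpow_abs_derive; auto.
  - apply (Cn_ext c d n (fun x => p * Rpower (Rabs (h x)) p * (Derive h x * / h x))).
    + intros x Hx. symmetry. apply is_derive_unique. apply rpow_abs_derive; auto.
    + apply Cn_mult; [apply Cn_mult; [apply Cn_const|apply IH; exact Hh']|].
      apply Cn_mult; [exact Hh2|]. apply Cn_inv; auto.
Qed.

Lemma Cn_of_derive_n c d h : (forall m x, c < x < d -> ex_derive_n h m x) -> forall n, Cn c d n h.
Proof.
  intros H n. revert h H. induction n as [|n IH]; intros h H; [exact I|]. split.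
  - intros x Hx. exact (H 1%nat x Hx).
  - apply IH. intros m x Hx. destruct m as [|m]; [exact I|].
    simpl. apply (ex_derive_ext (Derive_n h (S m))).
    + intros t. symmetry. pose proof (Derive_n_comp h m 1 t) as E. replace (m + 1)%nat with (S m) in E by lia. exact E.
    + exact (H (S (S m)) x Hx).
Qed.

Lemma sigma_Cn nu f g c d :
  (forall n, Cn c d n f) -> (forall n, Cn c d n g) ->
  (forall x, c < x < d -> g x <> 0) -> (forall x, c < x < d -> Derive g x <> 0) ->
  forall k n, Cn c d n (sigma nu f g k).
Proof.
  intros Hf Hg Hg0 Hg1 k. induction k as [|k IH]; intros n.
  - exact (Hf n).
  - simpl sigma. apply Cn_mult; [apply Cn_rpow; auto|].
    assert (Hin : Cn c d (S n) (fun y => sigma nu f g k y / (Rpower (Rabs (g y)) (nu + INR (S k)) * Derive g y))).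
    { apply (Cn_ext c d (S n) (fun y => sigma nu f g k y * / (Rpower (Rabs (g y)) (nu + INR (S k)) * Derive g y))).
      - intros; reflexivity.
      - apply Cn_mult; [apply IH|]. apply Cn_inv.
        + apply Cn_mult; [apply Cn_rpow; auto|]. exact (proj2 (Hg (S (S n)))).
        + intros x Hx. apply Rmult_integral_contrapositive_currified; [|apply Hg1; exact Hx].
          apply Rgt_not_eq, exp_pos. }
    exact (proj2 Hin).
Qed.

Definition Setup (g : R -> R) (c d s : R) : Prop :=
  (forall n, Cn c d n g) /\ (s = 1 \/ s = -1) /\
  (forall x, c < x < d -> 0 < s * g x) /\ (forall x, c < x < d -> Derive g x <> 0).

Definition sigop (g : R -> R) (mu : R) (h : R -> R) : R -> R := fun x =>
  Rpower (Rabs (g x)) mu * Derive (fun y => h y / (Rpower (Rabs (g y)) mu * Derive g y)) x.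

Lemma sigma_S nu f g k : sigma nu f g (S k) = sigop g (nu + INR (S k)) (sigma nu f g k).
Proof. reflexivity. Qed.

Section SecE.
Variables (g : R -> R) (c d s : R).
Hypothesis HS : Setup g c d s.

Lemma S_g n : Cn c d n g. Proof. apply HS. Qed.
Lemma S_g_ex x : c < x < d -> ex_derive g x. Proof. intros. apply (proj1 (S_g 1)); auto. Qed.
Lemma S_dg_ex x : c < x < d -> ex_derive (Derive g) x. Proof. intros. apply (proj1 (proj2 (S_g 2))); auto. Qed.
Lemma S_s2 : s * s = 1. Proof. destruct HS as [_ [[E|E] _]]; subst; ring. Qed.
Lemma S_pos x : c < x < d -> 0 < s * g x. Proof. apply HS. Qed.
Lemma S_dg x : c < x < d -> Derive g x <> 0. Proof. apply HS. Qed.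
Lemma S_abs x : c < x < d -> Rabs (g x) = s * g x.
Proof.
  intros Hx. pose proof (S_pos x Hx). destruct HS as [_ [[E|E] _]]; subst.
  - rewrite Rabs_pos_eq; lra.
  - rewrite Rabs_left; lra.
Qed.
Lemma S_gnz x : c < x < d -> g x <> 0.
Proof. intros Hx E. pose proof (S_pos x Hx). rewrite E in H. lra. Qed.
Lemma S_abs_pos x : c < x < d -> 0 < Rabs (g x).
Proof. intros Hx. rewrite S_abs by auto. apply S_pos; auto. Qed.

Lemma S_gJ_derive omega mu x : 0 < omega -> c < x < d ->
  is_derive (fun y => J mu (omega * Rabs (g y))) x
   (omega * s * Derive g x * (J (mu - 1) (omega * Rabs (g x)) - mu / (omega * Rabs (g x)) * J mu (omega * Rabs (g x)))).
Proof.
  intros Ho Hx.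
  apply (is_derive_ext_loc (fun y => J mu (omega * (s * g y)))).
  { eapply filter_imp; [|apply (locU c d x Hx)]. intros t Ht. rewrite S_abs by auto. reflexivity. }
  rewrite S_abs by auto.
  assert (Pp : 0 < omega * (s * g x)) by (apply Rmult_lt_0_compat; auto; apply S_pos; auto).
  replace (omega * s * Derive g x * (J (mu - 1) (omega * (s * g x)) - mu / (omega * (s * g x)) * J mu (omega * (s * g x))))
    with (scal (omega * (s * Derive g x)) (J (mu - 1) (omega * (s * g x)) - mu / (omega * (s * g x)) * J mu (omega * (s * g x)))).
  - apply (is_derive_comp (J mu) (fun y => omega * (s * g y))).
    + apply J_derive2. exact Pp.
    + pose proof (S_g_ex x Hx) as Hg. auto_derive; [exact Hg|].
      change (Derive (fun x0 => g x0) x) with (Derive g x). ring.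
  - unfold scal; simpl. unfold mult; simpl. ring.
Qed.

Lemma S_gJ_ex omega mu x : 0 < omega -> c < x < d -> ex_derive (fun y => J mu (omega * Rabs (g y))) x.
Proof. intros. eexists. apply S_gJ_derive; auto. Qed.

Lemma S_rpow_ex mu x : c < x < d -> ex_derive (fun y => Rpower (Rabs (g y)) mu) x.
Proof. intros. eexists. apply rpow_abs_derive. apply S_gnz; auto. apply S_g_ex; auto. Qed.

Lemma S_Phi_derive omega mu x : 0 < omega -> c < x < d ->
  is_derive (fun y => Rpower (Rabs (g y)) mu * J mu (omega * Rabs (g y))) x
    (Rpower (Rabs (g x)) mu * J (mu - 1) (omega * Rabs (g x)) * (omega * s * Derive g x)).
Proof.
  intros Ho Hx.
  pose proof (rpow_abs_derive g mu x (S_gnz x Hx) (S_g_ex x Hx)) as D1.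
  pose proof (S_gJ_derive omega mu x Ho Hx) as D2.
  pose proof (is_derive_mult _ _ _ _ _ D1 D2 ltac:(intros; apply Rmult_comm)) as D.
  eapply is_derive_ext; [intros; reflexivity|].
  replace (Rpower (Rabs (g x)) mu * J (mu - 1) (omega * Rabs (g x)) * (omega * s * Derive g x))
    with (plus (mult (mu * Rpower (Rabs (g x)) mu * (Derive g x * / g x)) (J mu (omega * Rabs (g x))))
               (mult (Rpower (Rabs (g x)) mu) (omega * s * Derive g x * (J (mu - 1) (omega * Rabs (g x)) - mu / (omega * Rabs (g x)) * J mu (omega * Rabs (g x)))))).
  - exact D.
  - unfold plus, mult; simpl. rewrite (S_abs x Hx).
    pose proof (S_gnz x Hx). pose proof S_s2.
    assert (s <> 0) by (intros E; rewrite E in H0; lra).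
    field. repeat split; auto. lra.
Qed.

Lemma S_cont_of_ex (f : R -> R) (x : R) : ex_derive f x -> continuous f x.
Proof. intros H. exact (@ex_derive_continuous R_AbsRing R_NormedModule f x H). Qed.

Lemma IBP a b omega mu h : c < a -> a < b -> b < d -> 0 < omega -> (forall n, Cn c d n h) ->
  RInt (fun x => h x * J (mu - 1) (omega * Rabs (g x))) a b =
  / (omega * s) * ((h b / Derive g b * J mu (omega * Rabs (g b)) - h a / Derive g a * J mu (omega * Rabs (g a)))
                   - RInt (fun x => sigop g mu h x * J mu (omega * Rabs (g x))) a b).
Proof.
  intros Hca Hab Hbd Ho Hh.
  set (P := fun y => h y / (Rpower (Rabs (g y)) mu * Derive g y)).
  set (Phi := fun y => Rpower (Rabs (g y)) mu * J mu (omega * Rabs (g y))).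
  set (dPhi := fun x => Rpower (Rabs (g x)) mu * J (mu - 1) (omega * Rabs (g x)) * (omega * s * Derive g x)).
  assert (HU : forall x, Rmin a b <= x <= Rmax a b -> c < x < d).
  { intros x Hx. rewrite Rmin_left, Rmax_right in Hx by lra. lra. }
  assert (HPC : forall n, Cn c d n P).
  { intros n. apply (Cn_ext c d n (fun y => h y * / (Rpower (Rabs (g y)) mu * Derive g y))); [intros; reflexivity|].
    apply Cn_mult; [apply Hh|]. apply Cn_inv.
    - apply Cn_mult; [apply Cn_rpow; [apply S_g|intros; apply S_gnz; auto]|]. exact (proj2 (S_g (S n))).
    - intros x Hx. apply Rmult_integral_contrapositive_currified; [apply Rgt_not_eq, exp_pos|apply S_dg; auto]. }
  assert (HPex : forall x, c < x < d -> ex_derive P x) by (intros; apply (proj1 (HPC 1%nat)); auto).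
  assert (HdPex : forall x, c < x < d -> ex_derive (Derive P) x) by (intros; apply (proj1 (proj2 (HPC 2%nat))); auto).
  assert (HPhi : forall x, c < x < d -> is_derive Phi x (dPhi x)) by (intros; apply S_Phi_derive; auto).
  assert (HdPhiex : forall x, c < x < d -> ex_derive dPhi x).
  { intros x Hx. unfold dPhi. apply ex_derive_mult; [apply ex_derive_mult|].
    - apply S_rpow_ex; auto.
    - apply S_gJ_ex; auto.
    - apply ex_derive_mult; [apply ex_derive_const|]. apply S_dg_ex; auto. }
  assert (H1 : is_RInt (fun x => Derive P x * Phi x + P x * dPhi x) a b
                 (minus (P b * Phi b) (P a * Phi a))).
  { apply (is_RInt_derive (fun x => P x * Phi x)).
    - intros x Hx. pose proof (is_derive_mult (K:=R_AbsRing) P Phi x _ _ (Derive_correct _ _ (HPex x (HU x Hx))) (HPhi x (HU x Hx)) ltac:(intros; apply Rmult_comm)) as D.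
      exact D.
    - intros x Hx. apply (continuous_plus (V:=R_NormedModule)); apply (continuous_mult (K:=R_AbsRing)).
      + apply S_cont_of_ex. apply HdPex; auto.
      + apply S_cont_of_ex. eexists. apply HPhi; auto.
      + apply S_cont_of_ex. apply HPex; auto.
      + apply S_cont_of_ex. apply HdPhiex; auto. }
  assert (H2 : ex_RInt (fun x => Derive P x * Phi x) a b).
  { apply (ex_RInt_continuous (V:=R_CompleteNormedModule)). intros x Hx.
    apply (continuous_mult (K:=R_AbsRing) (Derive P) Phi).
    + apply S_cont_of_ex. apply HdPex; auto.
    + apply S_cont_of_ex. eexists. apply HPhi; auto. }
  apply (RInt_correct (V:=R_CompleteNormedModule)) in H2.
  pose proof (is_RInt_minus _ _ _ _ _ _ H1 H2) as H3.
  pose proof (is_RInt_scal _ _ _ (/ (omega * s)) _ H3) as H4.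
  rewrite (RInt_ext _ (fun y => scal (/ (omega * s)) (minus (Derive P y * Phi y + P y * dPhi y) (Derive P y * Phi y)))).
  2:{ intros x Hx. pose proof (HU x ltac:(lra)) as Hx'.
      unfold scal, minus, plus, mult, opp; simpl. unfold mult, plus, opp; simpl.
      unfold P, dPhi. pose proof (S_dg x Hx'). pose proof S_s2.
      assert (s <> 0) by (intros E; rewrite E in H0; lra).
      assert (0 < Rpower (Rabs (g x)) mu) by apply exp_pos.
      field. repeat split; lra. }
  match goal with |- RInt ?F a b = _ => assert (E4 : RInt F a b = scal (/ (omega * s)) (minus (minus (P b * Phi b) (P a * Phi a)) (RInt (fun x : R => Derive P x * Phi x) a b))) by (apply is_RInt_unique; exact H4) end.
  rewrite E4.
  rewrite (RInt_ext (fun x => sigop g mu h x * J mu (omega * Rabs (g x))) (fun x => Derive P x * Phi x)).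
  2:{ intros x Hx. unfold sigop, Phi. fold P. rewrite <- Rmult_assoc, (Rmult_comm (Rpower _ _) (Derive P x)). reflexivity. }
  unfold scal, minus, plus, mult, opp; simpl. unfold mult, plus, opp; simpl.
  unfold P, Phi.
  assert (Hb' : c < b < d) by lra. assert (Ha' : c < a < d) by lra.
  pose proof (S_dg b Hb'). pose proof (S_dg a Ha').
  assert (0 < Rpower (Rabs (g b)) mu) by apply exp_pos.
  assert (0 < Rpower (Rabs (g a)) mu) by apply exp_pos.
  pose proof S_s2 as Hs2. assert (s <> 0) by (intros E; rewrite E in Hs2; lra).
  field. repeat split; try lra; auto.
Qed.

End SecE.

Lemma rpow_final w N : 0 < w -> (/ w) ^ (S N) * / sqrt w = Rpower w (- (INR N + 3 / 2)).
Proof.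
  intros Hw. rewrite Rpower_Ropp.
  replace (INR N + 3 / 2) with (INR (S N) + / 2) by (rewrite S_INR; field).
  rewrite Rpower_plus, Rpower_pow, Rpower_sqrt by lra.
  rewrite pow_inv, Rinv_mult. reflexivity.
Qed.

Section F.
Variables (g : R -> R) (c d s : R).
Hypothesis HS : Setup g c d s.
Variables (nu : R) (f : R -> R) (a b : R).
Hypothesis Hca : c < a.
Hypothesis Hab : a < b.
Hypothesis Hbd : b < d.
Hypothesis Hf : forall n, Cn c d n f.

Definition Rk w k := RInt (fun x => sigma nu f g k x * J (nu + INR k) (w * Rabs (g x))) a b.
Definition bk w k := sigma nu f g (k - 1) b / Derive g b * J (nu + INR k) (w * Rabs (g b))
                   - sigma nu f g (k - 1) a / Derive g a * J (nu + INR k) (w * Rabs (g a)).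

Lemma sig_Cn k n : Cn c d n (sigma nu f g k).
Proof.
  apply sigma_Cn; auto.
  - apply (S_g g c d s HS).
  - intros; apply (S_gnz g c d s HS); auto.
  - intros; apply (S_dg g c d s HS); auto.
Qed.

Lemma R_step w k : 0 < w -> Rk w k = / (w * s) * (bk w (S k) - Rk w (S k)).
Proof.
  intros Hw. pose proof (IBP g c d s HS a b w (nu + INR (S k)) (sigma nu f g k) Hca Hab Hbd Hw (sig_Cn k)) as H.
  replace (nu + INR (S k) - 1) with (nu + INR k) in H by (rewrite S_INR; ring).
  unfold Rk, bk. rewrite H. replace (S k - 1)%nat with k by lia. reflexivity.
Qed.

Lemma R_sum w N : 0 < w ->
  Rk w 0 + sum_n_m (fun k => (- / (w * s)) ^ k * bk w k) 1 N = (- / (w * s)) ^ N * Rk w N.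
Proof.
  intros Hw. induction N as [|N IH].
  - rewrite sum_n_m_zero by lia. unfold zero; simpl. ring.
  - rewrite sum_n_Sm by lia. unfold plus; simpl.
    rewrite <- Rplus_assoc, IH, (R_step w N Hw).
    simpl pow. ring.
Qed.

Lemma R_bound N : exists M w0, 0 < w0 /\ forall w, w0 <= w ->
  Rabs ((- / (w * s)) ^ N * Rk w N) <= M * Rpower w (- (INR N + 3 / 2)).
Proof.
  set (mu := nu + INR (S N)).
  destruct (J_bound mu) as [X [K [HX [HK HJ]]]].
  assert (HU : forall x, a <= x <= b -> c < x < d) by (intros; lra).
  destruct (continuity_ab_min (fun x => Rabs (g x)) a b ltac:(lra)) as [xm [Hxm Hxm']].
  { intros x Hx. apply continuity_pt_comp with (f1 := g) (f2 := Rabs).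
    - destruct (S_g_ex g c d s HS x (HU x Hx)) as [l Hl]. eapply is_derive_cont_pt. exact Hl.
    - apply Rcontinuity_abs. }
  set (m := Rabs (g xm)).
  assert (Hm : 0 < m) by (apply (S_abs_pos g c d s HS); auto).
  set (sg := sigma nu f g (S N)).
  assert (Hsg : forall x, c < x < d -> ex_derive sg x) by (intros; apply (proj1 (sig_Cn (S N) 1)); auto).
  destruct (continuity_ab_maj (fun x => Rabs (sg x)) a b ltac:(lra)) as [xM [HxM HxM']].
  { intros x Hx. apply continuity_pt_comp with (f1 := sg) (f2 := Rabs).
    - destruct (Hsg x (HU x Hx)) as [l Hl]. eapply is_derive_cont_pt. exact Hl.
    - apply Rcontinuity_abs. }
  set (Ms := Rabs (sg xM)).
  set (A := Rabs (sigma nu f g N b / Derive g b) + Rabs (sigma nu f g N a / Derive g a)).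
  set (C := K / sqrt m * (A + (b - a) * Ms)).
  exists C, (Rmax 1 (X / m)). split; [apply Rlt_le_trans with 1; [lra|apply Rmax_l]|].
  intros w Hw.
  assert (Hw1 : 1 <= w) by (eapply Rle_trans; [apply Rmax_l|exact Hw]).
  assert (HwX : X / m <= w) by (eapply Rle_trans; [apply Rmax_r|exact Hw]).
  assert (Pw : 0 < w) by lra.
  assert (Sw : 0 < sqrt w) by (apply sqrt_lt_R0; lra).
  assert (Sm : 0 < sqrt m) by (apply sqrt_lt_R0; lra).
  assert (HJx : forall x, a <= x <= b -> Rabs (J mu (w * Rabs (g x))) <= K / sqrt m * / sqrt w).
  { intros x Hx. assert (Hmx : m <= Rabs (g x)) by (apply Hxm; exact Hx).
    assert (Hwm : X <= w * m).
    { apply Rmult_le_reg_r with (/ m); [apply Rinv_0_lt_compat; lra|].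
      rewrite Rmult_assoc, Rinv_r, Rmult_1_r by lra. exact HwX. }
    assert (Hwg : w * m <= w * Rabs (g x)) by (apply Rmult_le_compat_l; lra).
    eapply Rle_trans; [apply HJ; lra|].
    unfold Rdiv. rewrite Rmult_assoc. apply Rmult_le_compat_l; [exact HK|].
    rewrite <- Rinv_mult. apply Rinv_le_contravar; [apply Rmult_lt_0_compat; lra|].
    rewrite <- sqrt_mult by lra. apply sqrt_le_1; lra. }
  assert (Hb : Rabs (bk w (S N)) <= A * (K / sqrt m * / sqrt w)).
  { unfold bk. replace (S N - 1)%nat with N by lia. fold mu.
    eapply Rle_trans; [apply Rabs_triang|]. rewrite Rabs_Ropp, !Rabs_mult.
    unfold A. rewrite Rmult_plus_distr_r.
    apply Rplus_le_compat; apply Rmult_le_compat_l; try apply Rabs_pos; apply HJx; lra. }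
  assert (HR : Rabs (Rk w (S N)) <= (b - a) * (Ms * (K / sqrt m * / sqrt w))).
  { unfold Rk. fold sg. fold mu. apply abs_RInt_le_const; [lra| |].
    - apply (ex_RInt_continuous (V:=R_CompleteNormedModule)). intros x Hx.
      rewrite Rmin_left, Rmax_right in Hx by lra.
      apply S_cont_of_ex. apply ex_derive_mult; [apply Hsg; auto|].
      apply (S_gJ_ex g c d s HS); auto.
    - intros x Hx. rewrite Rabs_mult. apply Rmult_le_compat; try apply Rabs_pos.
      + apply HxM. exact Hx.
      + apply HJx. exact Hx. }
  rewrite (R_step w N Pw).
  rewrite Rabs_mult, <- RPow_abs.
  assert (Hq : Rabs (- / (w * s)) = / w).
  { rewrite Rabs_Ropp, Rabs_inv, Rabs_mult.
    assert (As : Rabs s = 1).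
    { destruct HS as [_ [[E|E] _]]; rewrite E; [apply Rabs_R1|rewrite Rabs_left; lra]. }
    rewrite As, Rabs_pos_eq by lra. field. lra. }
  assert (Hq' : Rabs (/ (w * s)) = / w) by (rewrite <- Hq, Rabs_Ropp; reflexivity).
  rewrite Hq, Rabs_mult, Hq'.
  rewrite <- rpow_final by exact Pw.
  assert (Hbr : Rabs (bk w (S N) - Rk w (S N)) <= C * / sqrt w).
  { eapply Rle_trans; [apply Rabs_triang|]. rewrite Rabs_Ropp.
    unfold C. replace (K / sqrt m * (A + (b - a) * Ms) * / sqrt w)
      with (A * (K / sqrt m * / sqrt w) + (b - a) * (Ms * (K / sqrt m * / sqrt w))) by ring.
    apply Rplus_le_compat; assumption. }
  simpl pow.
  assert (0 < (/ w) ^ N) by (apply pow_lt; apply Rinv_0_lt_compat; lra).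
  assert (0 < / w) by (apply Rinv_0_lt_compat; lra).
  replace (C * (/ w * (/ w) ^ N * / sqrt w)) with ((/ w) ^ N * (/ w * (C * / sqrt w))) by ring.
  apply Rmult_le_compat_l; [lra|]. apply Rmult_le_compat_l; [lra|]. exact Hbr.
Qed.

End F.

Lemma Cscal_eq (r : R) (p : C) : scal r p = (r * fst p, r * snd p).
Proof. destruct p. reflexivity. Qed.
Lemma Cminus_eq (p q : C) : minus p q = (fst p - fst q, snd p - snd q).
Proof. destruct p, q. reflexivity. Qed.
Lemma Cplus_eq (p q : C) : plus p q = (fst p + fst q, snd p + snd q).
Proof. destruct p, q. reflexivity. Qed.
Lemma Copp_eq (p : C) : opp p = (- fst p, - snd p).
Proof. destruct p. reflexivity. Qed.

Lemma RInt_C_scal (u : R -> R) a b (p : C) : ex_RInt u a b ->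
  @RInt C_R_CompleteNormedModule (fun x => scal (u x) p) a b = scal (RInt u a b) p.
Proof.
  intros H. apply is_RInt_unique.
  apply (RInt_correct (V:=R_CompleteNormedModule)) in H.
  destruct p as [p1 p2].
  pose proof (is_RInt_scal _ _ _ p1 _ H) as H1.
  pose proof (is_RInt_scal _ _ _ p2 _ H) as H2.
  pose proof (is_RInt_fct_extend_pair (U:=R_NormedModule) (V:=R_NormedModule) (fun x => (scal p1 (u x), scal p2 (u x))) a b _ _ H1 H2) as H3.
  replace (scal (RInt u a b) (p1, p2)) with ((scal p1 (RInt u a b), scal p2 (RInt u a b)) : C).
  2:{ rewrite Cscal_eq. simpl. unfold scal; simpl; unfold mult; simpl. f_equal; ring. }
  eapply (is_RInt_ext (V:=C_R_NormedModule)); [|exact H3].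
  intros x _. rewrite Cscal_eq. simpl. unfold scal; simpl; unfold mult; simpl. f_equal; ring.
Qed.

Lemma Cmod_scal (r : R) (p : C) : Cmod (scal r p) = Rabs r * Cmod p.
Proof.
  rewrite <- Cmod_R, <- Cmod_mult. f_equal. rewrite Cscal_eq. destruct p as [p1 p2].
  unfold Cmult, RtoC; simpl. f_equal; ring.
Qed.

Lemma sum_scal_C (cf : nat -> R) (p : C) m :
  @sum_n_m C_AbelianMonoid (fun k => scal (cf k) p) 1 m = scal (sum_n_m cf 1 m) p.
Proof.
  destruct p as [p1 p2].
  induction m as [|m IH].
  - rewrite !sum_n_m_zero by lia. simpl. unfold zero; simpl. rewrite Cscal_eq. apply injective_projections; simpl; ring.
  - rewrite !sum_n_Sm by lia. rewrite IH. rewrite !Cscal_eq. simpl. unfold plus; simpl. apply injective_projections; simpl; ring.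
Qed.

Lemma loc_pos (phi : R -> R) p : continuity_pt phi p -> 0 < phi p ->
  exists del, 0 < del /\ forall t, Rabs (t - p) < del -> 0 < phi t.
Proof.
  intros Hc Hp. destruct (Hc (phi p) Hp) as [alp [Halp H]].
  exists alp. split; [lra|]. intros t Ht.
  destruct (Req_dec t p) as [E|E]; [subst; lra|].
  assert (Hd : D_x no_cond p t /\ R_dist t p < alp) by (split; [split; [exact I|auto]|exact Ht]).
  specialize (H t Hd). simpl in H. unfold R_dist in H. apply Rabs_def2 in H. lra.
Qed.

Lemma cont_of_ex (f : R -> R) x : ex_derive f x -> continuity_pt f x.
Proof. intros [l Hl]. eapply is_derive_cont_pt. exact Hl. Qed.

Theorem theorem2p1 (nu a b : R) (f g : R -> R) :
  a < b ->
  smooth_on f a b -> smooth_on g a b ->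
  (forall x, a <= x <= b -> g x <> 0) ->
  (forall x, a <= x <= b -> Derive g x <> 0) ->
  forall N : nat, exists M omega0 : R, 0 < omega0 /\
    forall omega : R, omega0 <= omega ->
      Cmod (minus (Hnu nu f g a b omega)
                  (opp (sum_n_m (asym_term nu f g a b omega) 1 N)))
      <= M * Rpower omega (- (INR N + 3 / 2)).
Proof.
  intros Hab [c1 [d1 [Hc1 [Hd1 Hf]]]] [c2 [d2 [Hc2 [Hd2 Hg]]]] Hg0 Hg1 N.
  set (c0 := Rmax c1 c2). set (d0 := Rmin d1 d2).
  assert (Hc0 : c0 < a) by (unfold c0; apply Rmax_lub_lt; lra).
  assert (Hd0 : b < d0) by (unfold d0; apply Rmin_glb_lt; lra).
  assert (Hc0' : c1 <= c0 /\ c2 <= c0) by (unfold c0; split; [apply Rmax_l|apply Rmax_r]).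
  assert (Hd0' : d0 <= d1 /\ d0 <= d2) by (unfold d0; split; [apply Rmin_l|apply Rmin_r]).
  assert (Hg0C : forall n, Cn c0 d0 n g).
  { apply Cn_of_derive_n. intros m x Hx. apply Hg. lra. }
  assert (Hgex : forall x, c0 < x < d0 -> ex_derive g x) by (intros; apply (proj1 (Hg0C 1%nat)); auto).
  assert (Hdgex : forall x, c0 < x < d0 -> ex_derive (Derive g) x) by (intros; apply (proj1 (proj2 (Hg0C 2%nat))); auto).
  set (s := if Rlt_dec 0 (g a) then 1 else -1).
  assert (Hs : s = 1 \/ s = -1) by (unfold s; destruct (Rlt_dec 0 (g a)); auto).
  assert (Hsa : 0 < s * g a).
  { unfold s. destruct (Rlt_dec 0 (g a)) as [H|H]; [lra|].
    assert (g a <> 0) by (apply Hg0; lra). lra. }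
  assert (Hsab : forall x, a <= x <= b -> 0 < s * g x).
  { intros x Hx. destruct (Req_dec x a) as [E|E]; [subst; exact Hsa|].
    destruct (Rlt_le_dec 0 (s * g x)) as [H|H]; [exact H|exfalso].
    assert (Hgx : g x <> 0) by (apply Hg0; lra).
    assert (Hsx : s * g x < 0).
    { destruct (Req_dec (s * g x) 0) as [E2|E2]; [|lra].
      exfalso. destruct Hs as [Es|Es]; rewrite Es in E2; apply Hgx; lra. }
    destruct (Ranalysis5.IVT_interv (fun t => - (s * g t)) a x) as [z [Hz Ez]].
    - intros t Ht. apply continuity_pt_opp. apply continuity_pt_scal.
      apply cont_of_ex. apply Hgex. lra.
    - lra.
    - lra.
    - lra.
    - apply (Hg0 z); [lra|]. destruct Hs as [Es|Es]; rewrite Es in Ez; lra. }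
  destruct (loc_pos (fun t => s * g t) a) as [da1 [Hda1 Pa1]].
  { apply continuity_pt_scal. apply cont_of_ex. apply Hgex. lra. } { exact Hsa. }
  destruct (loc_pos (fun t => s * g t) b) as [db1 [Hdb1 Pb1]].
  { apply continuity_pt_scal. apply cont_of_ex. apply Hgex. lra. } { apply Hsab; lra. }
  destruct (loc_pos (fun t => Derive g t * Derive g a) a) as [da2 [Hda2 Pa2]].
  { apply continuity_pt_mult; [|apply continuity_pt_const; intros u v; reflexivity].
    apply cont_of_ex. apply Hdgex. lra. }
  { assert (Derive g a <> 0) by (apply Hg1; lra). pose proof (Rsqr_pos_lt _ H). unfold Rsqr in H0. exact H0. }
  destruct (loc_pos (fun t => Derive g t * Derive g b) b) as [db2 [Hdb2 Pb2]].
  { apply continuity_pt_mult; [|apply continuity_pt_const; intros u v; reflexivity].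
    apply cont_of_ex. apply Hdgex. lra. }
  { assert (Derive g b <> 0) by (apply Hg1; lra). pose proof (Rsqr_pos_lt _ H). unfold Rsqr in H0. exact H0. }
  set (del := Rmin (Rmin da1 db1) (Rmin da2 db2)).
  assert (Hdel : 0 < del) by (unfold del; repeat apply Rmin_pos; lra).
  assert (Hdel' : del <= da1 /\ del <= db1 /\ del <= da2 /\ del <= db2).
  { unfold del. pose proof (Rmin_l (Rmin da1 db1) (Rmin da2 db2)). pose proof (Rmin_r (Rmin da1 db1) (Rmin da2 db2)).
    pose proof (Rmin_l da1 db1). pose proof (Rmin_r da1 db1). pose proof (Rmin_l da2 db2). pose proof (Rmin_r da2 db2). lra. }
  set (c := Rmax c0 (a - del)). set (d := Rmin d0 (b + del)).
  assert (Hc : c < a) by (unfold c; apply Rmax_lub_lt; lra).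
  assert (Hd : b < d) by (unfold d; apply Rmin_glb_lt; lra).
  assert (Hc' : c0 <= c /\ a - del <= c) by (unfold c; split; [apply Rmax_l|apply Rmax_r]).
  assert (Hd' : d <= d0 /\ d <= b + del) by (unfold d; split; [apply Rmin_l|apply Rmin_r]).
  assert (HS : Setup g c d s).
  { split; [|split; [exact Hs|split]].
    - apply Cn_of_derive_n. intros m x Hx. apply Hg. lra.
    - intros x Hx. destruct (Rlt_le_dec x a) as [H1|H1].
      + apply Pa1. rewrite Rabs_left by lra. lra.
      + destruct (Rle_lt_dec x b) as [H2|H2].
        * apply Hsab. lra.
        * apply Pb1. rewrite Rabs_pos_eq by lra. lra.
    - intros x Hx. destruct (Rlt_le_dec x a) as [H1|H1].
      + assert (P := Pa2 x ltac:(rewrite Rabs_left by lra; lra)). intros E. rewrite E in P. lra.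
      + destruct (Rle_lt_dec x b) as [H2|H2].
        * apply Hg1. lra.
        * assert (P := Pb2 x ltac:(rewrite Rabs_pos_eq by lra; lra)). intros E. rewrite E in P. lra. }
  assert (HfC : forall n, Cn c d n f).
  { apply Cn_of_derive_n. intros m x Hx. apply Hf. lra. }
  destruct (R_bound g c d s HS nu f a b Hc Hab Hd HfC N) as [M [w0 [Hw0 HM]]].
  exists M, w0. split; [exact Hw0|]. intros w Hw.
  assert (Pw : 0 < w) by lra.
  set (ph := fun mu : R => if Rlt_dec 0 s then ((1, 0) : C) else ((cos (PI * mu), sin (PI * mu)) : C)).
  assert (Hph : forall k, ph (nu + INR k) = scal (s ^ k) (ph nu)).
  { intros k. unfold ph. destruct (Rlt_dec 0 s) as [Hs0|Hs0].
    - assert (Es : s = 1) by (destruct Hs; lra). rewrite Es, pow1. rewrite Cscal_eq. simpl. f_equal; ring.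
    - assert (Es : s = -1) by (destruct Hs; lra). rewrite Cscal_eq. simpl fst. simpl snd.
      induction k as [|k IH].
      + simpl. rewrite Rplus_0_r. f_equal; ring.
      + rewrite S_INR. replace (PI * (nu + (INR k + 1))) with (PI * (nu + INR k) + PI) by ring.
        rewrite neg_cos, neg_sin. injection IH. intros E1 E2. rewrite E1, E2. simpl pow. rewrite Es. f_equal; ring. }
  assert (HBJ : forall mu x, c < x < d -> BesselJ mu (w * g x) = scal (J mu (w * Rabs (g x))) (ph mu)).
  { intros mu x Hx. rewrite Cscal_eq. unfold BesselJ, ph. rewrite (S_abs g c d s HS x Hx).
    pose proof (S_pos g c d s HS x Hx) as Px.
    destruct (Rlt_dec 0 s) as [Hs0|Hs0].
    - assert (Es : s = 1) by (destruct Hs; lra). rewrite Es in *.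
      destruct (Rlt_dec 0 (w * g x)) as [H|H]; [|exfalso; apply H; apply Rmult_lt_0_compat; lra].
      rewrite BesselJ_pos_J. unfold RtoC. simpl. replace (1 * g x) with (g x) by ring. f_equal; ring.
    - assert (Es : s = -1) by (destruct Hs; lra). rewrite Es in *.
      destruct (Rlt_dec 0 (w * g x)) as [H|H]; [exfalso; nra|].
      destruct (Rlt_dec (w * g x) 0) as [H'|H']; [|exfalso; apply H'; nra].
      rewrite BesselJ_pos_J. unfold Cmult, RtoC. simpl.
      replace (- (w * g x)) with (w * (-1 * g x)) by ring. f_equal; ring. }
  assert (HU : forall x, Rmin a b < x < Rmax a b -> c < x < d).
  { intros x Hx. rewrite Rmin_left, Rmax_right in Hx by lra. lra. }
  assert (EH : Hnu nu f g a b w = scal (Rk g nu f a b w 0) (ph nu)).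
  { unfold Hnu. rewrite (RInt_ext (V:=C_R_CompleteNormedModule) _ (fun x => scal (f x * J nu (w * Rabs (g x))) (ph nu))).
    - rewrite RInt_C_scal.
      + unfold Rk. simpl sigma. f_equal. apply RInt_ext. intros x _. rewrite Rplus_0_r. reflexivity.
      + apply (ex_RInt_continuous (V:=R_CompleteNormedModule)). intros x Hx.
        rewrite Rmin_left, Rmax_right in Hx by lra.
        apply S_cont_of_ex. apply ex_derive_mult.
        * apply (proj1 (HfC 1%nat)). lra.
        * apply (S_gJ_ex g c d s HS); lra.
    - intros x Hx. rewrite (HBJ nu x (HU x Hx)). rewrite scal_assoc. reflexivity. }
  assert (EA : forall k, asym_term nu f g a b w k = scal ((- / (w * s)) ^ k * bk g nu f a b w k) (ph nu)).
  { intros k. unfold asym_term, bk.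
    rewrite (HBJ _ b ltac:(lra)), (HBJ _ a ltac:(lra)), Hph.
    assert (Hs2 : s * s = 1) by (destruct Hs as [E|E]; rewrite E; ring).
    assert (Hsn : s <> 0) by (intros E; rewrite E in Hs2; lra).
    assert (Eq : (- / (w * s)) ^ k = / (- w) ^ k * s ^ k).
    { replace (- / (w * s)) with (/ (- w) * s) by (destruct Hs as [E|E]; rewrite E; field; lra).
      rewrite Rpow_mult_distr, pow_inv. reflexivity. }
    rewrite Eq.
    destruct (ph nu) as [p1 p2].
    rewrite !Cscal_eq. simpl. unfold plus, opp; simpl. f_equal; ring. }
  replace (@sum_n_m C_AbelianMonoid (asym_term nu f g a b w) 1 N) with (scal (sum_n_m (fun k => (- / (w * s)) ^ k * bk g nu f a b w k) 1 N) (ph nu)).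
  2:{ rewrite <- sum_scal_C. apply (sum_n_m_ext (G:=C_AbelianMonoid)). intros k. symmetry. apply EA. }
  rewrite EH.
  replace (@minus C_AbelianGroup (scal (Rk g nu f a b w 0) (ph nu)) (@opp C_AbelianGroup (scal (sum_n_m (fun k => (- / (w * s)) ^ k * bk g nu f a b w k) 1 N) (ph nu))))
    with (scal (Rk g nu f a b w 0 + sum_n_m (fun k => (- / (w * s)) ^ k * bk g nu f a b w k) 1 N) (ph nu)).
  2:{ destruct (ph nu) as [p1 p2]. rewrite !Cscal_eq. apply injective_projections; simpl; unfold plus, opp; simpl; ring. }
  rewrite (R_sum g c d s HS nu f a b Hc Hab Hd HfC w N Pw).
  rewrite Cmod_scal.
  assert (Hph1 : Cmod (ph nu) = 1).
  { unfold ph. destruct (Rlt_dec 0 s).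
    - change ((1, 0) : C) with (RtoC 1). rewrite Cmod_R. apply Rabs_R1.
    - unfold Cmod. simpl. pose proof (sin2_cos2 (PI * nu)) as E. unfold Rsqr in E.
      replace (cos (PI * nu) * (cos (PI * nu) * 1) + sin (PI * nu) * (sin (PI * nu) * 1)) with 1 by lra.
      apply sqrt_1. }
  rewrite Hph1, Rmult_1_r. apply HM. exact Hw.
Qed.
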